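(* Let $\lambda_1,\lambda_2\in\mathbb{C}$ and let $\alpha,\beta\in\mathbb{C}$ with $\alpha+\beta\notin\mathbb{Z}$ and $\alpha\notin\{-1,-2,-3,\dots\}$. On $W=V_{\lambda_1}\otimes V_{\lambda_2}$ (with basis $e_n\otimes f_m$, $n,m\ge 0$, where $\{e_n\}$ is the standard basis of $V_{\lambda_1}$ and $\{f_m\}$ that of $V_{\lambda_2}$) put $H^{(1)}=H\otimes\mathbb{I}$, $H^{(2)}=\mathbb{I}\otimes H$, and let $D=H^{(1)}-H^{(2)}-\lambda_1+\lambda_2+2\alpha+2\beta+2$, a diagonal operator which is invertible. Define operators on $W$ by $$\Delta(H)=H^{(1)}+H^{(2)},$$ $$\Delta(E)=D^{-1}\Big((H^{(1)}-\lambda_1+2\alpha+2\beta+2)(E\otimes\mathbb{I})+(\lambda_2-H^{(2)}+2\alpha+2\beta+2)(\mathbb{I}\otimes E)\Big),$$ $$\Delta(F)=D^{-1}\Big((H^{(1)}-\lambda_1+2\alpha+2)(F\otimes\mathbb{I})+(\lambda_2-H^{(2)}+2\beta)(\mathbb{I}\otimes F)\Big).$$ Then (a) $\Delta(H),\Delta(E),\Delta(F)$ satisfy $[\Delta(H),\Delta(E)]=2\Delta(E)$, $[\Delta(H),\Delta(F)]=-2\Delta(F)$, $[\Delta(E),\Delta(F)]=1$, i.e. they define a representation of the oscillator algebra on $W$; and (b) for all integers $0\le k\le N$, the vectors $w_{k,N}=\sum_{n=0}^N Q_n(k,N)\,e_n\otimes f_{N-n}$ satisfy $\Delta(H)w_{k,N}=(\lambda_1+\lambda_2+2N)w_{k,N}$,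 $\Delta(E)w_{k,N}=w_{k,N+1}$, and $\Delta(F)w_{k,N}=-(N-k)\,w_{k,N-1}$ (with the convention $w_{k,k-1}=0$). In other words, the $Q_n(k,N)$ are the Clebsch–Gordan coefficients realizing, with respect to this tensor product action, vectors of the oscillator-algebra module $V_{\lambda_1+\lambda_2+2k}$ inside $V_{\lambda_1}\otimes V_{\lambda_2}$.
   Context: The oscillator algebra is generated by $H,E,F$ with relations $[H,E]=2E$, $[H,F]=-2F$, $[E,F]=1$. For $\lambda\in\mathbb{C}$, $V_\lambda$ is the module with basis $\{|\lambda,n\rangle: n=0,1,2,\dots\}$ and action $H|\lambda,n\rangle=(\lambda+2n)|\lambda,n\rangle$, $E|\lambda,n\rangle=|\lambda,n+1\rangle$, $F|\lambda,n\rangle=-n|\lambda,n-1\rangle$. Products of operators such as $D^{-1}(\cdots)(E\otimes\mathbb{I})$ mean composition (first apply $E\otimes\mathbb{I}$, then the diagonal operators). The functions $Q_n(k,N)$ (proportional to Hahn polynomials) are $$Q_n(k,N)=\binom{N}{n}\,{}_3F_2\!\left(\begin{matrix}-n,\ n+\alpha+\beta-N+1,\ -k\\ \alpha+1,\ -N\end{matrix}\;\Big|\;1\right),$$ where ${}_3F_2$ is the terminating hypergeometric series $\sum_{j\ge0}\frac{(a_1)_j(a_2)_j(a_3)_j}{j!(b_1)_j(b_2)_j}z^j$ with Pochhammer symbols $(a)_j=a(a+1)\cdots(a+j-1)$ (the sum terminates at $j=\min(n,k)\le N$). *)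

(* Defs.v *)
(* Scalars: an arbitrary numClosedFieldType C (e.g. algC or
   complex R), generalizing the complex numbers. *)
From mathcomp Require Import all_boot all_order all_algebra.
Set Implicit Arguments. Unset Strict Implicit. Unset Printing Implicit Defensive.
Import Order.TTheory GRing.Theory Num.Theory.
Local Open Scope ring_scope.

Section Osc.
Variable C : numClosedFieldType.

(* A vector of (a completion of) V_l1 (x) V_l2 is its coefficient array:
   v n m = coefficient of e_n (x) f_m. *)
Definition vec := nat -> nat -> C.

(* W = V_l1 (x) V_l2 : finitely supported coefficient arrays *)
Definition inW (v : vec) : Prop :=
  exists B : nat, forall n m, (B <= n + m)%N -> v n m = 0.

Definition vadd (u v : vec) : vec := fun n m => u n m + v n m.
Definition vsub (u v : vec) : vec := fun n m => u n m - v n m.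
Definition vscale (c : C) (v : vec) : vec := fun n m => c * v n m.
Definition vzero : vec := fun _ _ => 0.

(* E (x) I : e_n (x) f_m |-> e_{n+1} (x) f_m *)
Definition E1 (v : vec) : vec := fun n m => if n is n'.+1 then v n' m else 0.
Definition E2 (v : vec) : vec := fun n m => if m is m'.+1 then v n m' else 0.
(* F (x) I : e_n (x) f_m |-> -n e_{n-1} (x) f_m *)
Definition F1 (v : vec) : vec := fun n m => - (n.+1)%:R * v n.+1 m.
Definition F2 (v : vec) : vec := fun n m => - (m.+1)%:R * v n m.+1.
Definition H1 (l1 : C) (v : vec) : vec := fun n m => (l1 + 2 * n%:R) * v n m.
Definition H2 (l2 : C) (v : vec) : vec := fun n m => (l2 + 2 * m%:R) * v n m.

Definition Deig (l1 l2 a b : C) (n m : nat) : C :=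
  (l1 + 2 * n%:R) - (l2 + 2 * m%:R) - l1 + l2 + 2 * a + 2 * b + 2.
Definition Dop (l1 l2 a b : C) (v : vec) : vec :=
  fun n m => Deig l1 l2 a b n m * v n m.
Definition Dinv (l1 l2 a b : C) (v : vec) : vec :=
  fun n m => v n m / Deig l1 l2 a b n m.

Definition DeltaH (l1 l2 : C) (v : vec) : vec := vadd (H1 l1 v) (H2 l2 v).

Definition DeltaE (l1 l2 a b : C) (v : vec) : vec :=
  Dinv l1 l2 a b
    (vadd (vadd (vscale (- l1 + 2 * a + 2 * b + 2) (E1 v)) (H1 l1 (E1 v)))
          (vsub (vscale (l2 + 2 * a + 2 * b + 2) (E2 v)) (H2 l2 (E2 v)))).

Definition DeltaF (l1 l2 a b : C) (v : vec) : vec :=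
  Dinv l1 l2 a b
    (vadd (vadd (vscale (- l1 + 2 * a + 2) (F1 v)) (H1 l1 (F1 v)))
          (vsub (vscale (l2 + 2 * b) (F2 v)) (H2 l2 (F2 v)))).

Definition comm (A B : vec -> vec) (v : vec) : vec := vsub (A (B v)) (B (A v)).

Definition poch (x : C) (j : nat) : C := \prod_(i < j) (x + i%:R).

Definition hyp3F2 (a1 a2 a3 b1 b2 : C) (J : nat) : C :=
  \sum_(j < J.+1)
    poch a1 j * poch a2 j * poch a3 j / ((j`!)%:R * poch b1 j * poch b2 j).

(* Q_n(k,N) ; the series terminates at j = min(n,k) *)
Definition Qfun (a b : C) (n k N : nat) : C :=
  ('C(N, n))%:R *
  hyp3F2 (- n%:R) (n%:R + a + b - N%:R + 1) (- k%:R) (a + 1) (- N%:R) (minn n k).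

Definition wvec (a b : C) (k N : nat) : vec :=
  fun n m => if (n + m == N)%N then Qfun a b n k N else 0.

End Osc.

(* Main.v *)
Require Import Defs.
From mathcomp Require Import all_boot all_order all_algebra.
From mathcomp Require Import ring lra zify.
From Stdlib Require Import FunctionalExtensionality.
Set Implicit Arguments. Unset Strict Implicit. Unset Printing Implicit Defensive.
Import Order.TTheory GRing.Theory Num.Theory.
Local Open Scope ring_scope.

Section Gen.
Variable C : numClosedFieldType.
Implicit Types x y c B : C.

Lemma poch0 x : poch x 0 = 1.
Proof. by rewrite /poch big_ord0. Qed.

Lemma pochS x j : poch x j.+1 = poch x j * (x + j%:R).
Proof. by rewrite /poch big_ord_recr. Qed.

Lemma pochSl x j : poch x j.+1 = x * poch (x + 1) j.
Proof.
rewrite /poch big_ord_recl /= addr0; congr (_ * _).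
by apply: eq_bigr => i _; rewrite /bump /= natrD addrA.
Qed.

Lemma poch_add x j l : poch x (j + l) = poch x j * poch (x + j%:R) l.
Proof.
elim: l => [|l IH]; first by rewrite addn0 poch0 mulr1.
by rewrite addnS !pochS IH natrD addrA mulrA.
Qed.

Lemma poch_neg (n j : nat) : poch (- n%:R : C) j = (-1) ^+ j * (n ^_ j)%:R.
Proof.
elim: j => [|j IH]; first by rewrite poch0 ffactn0 expr0 mulr1.
rewrite pochS IH ffactnSr exprS natrM.
case: (leqP j n) => hjn.
  by rewrite natrB //; ring.
by rewrite ffact_small //; ring.
Qed.

Lemma binC_id (N n j : nat) : (j <= n)%N -> (n <= N)%N ->
  ('C(N, n) * 'C(n, j) = 'C(N, j) * 'C(N - j, n - j))%N.
Proof.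
move=> hjn hnN.
have h1 := bin_fact hnN.
have h2 := bin_fact hjn.
have hjN : (j <= N)%N by apply: leq_trans hnN.
have h3 := bin_fact hjN.
have h4 : (n - j <= N - j)%N by rewrite leq_sub2r.
have h4' := bin_fact h4.
have e : (N - j - (n - j) = N - n)%N.
  by rewrite subnBA // subnK.
rewrite e in h4'.
apply/eqP; rewrite -(eqn_pmul2r (_ : 0 < j`! * (n - j)`! * (N - n)`!)%N); last first.
  by rewrite !muln_gt0 !fact_gt0.
apply/eqP.
have -> : ('C(N, n) * 'C(n, j) * (j`! * (n - j)`! * (N - n)`!) =
   'C(N, n) * ('C(n, j) * (j`! * (n - j)`!) * (N - n)`!))%N.
  by rewrite !mulnA.
rewrite h2.
have -> : ('C(N, n) * (n`! * (N - n)`!) = N`!)%N by [].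
rewrite -h3.
have -> : ('C(N, j) * 'C(N - j, n - j) * (j`! * (n - j)`! * (N - n)`!) =
   'C(N, j) * (j`! * ('C(N - j, n - j) * ((n - j)`! * (N - n)`!))))%N.
  by rewrite !mulnA [('C(N, j) * _ * j`!)%N]mulnAC.
by rewrite h4'.
Qed.

Lemma chu (n : nat) B c :
  \sum_(j < n.+1) (-1) ^+ j * ('C(n, j))%:R * poch B j * poch (c + j%:R) (n - j)
  = poch (c - B) n.
Proof.
elim: n B c => [|n IH] B c.
  by rewrite big_ord_recl big_ord0 /= !poch0 expr0 bin0 addr0; ring.
rewrite big_ord_recl /=.
have e : forall i : 'I_n.+1,
   (-1) ^+ (bump 0 i) * ('C(n.+1, bump 0 i))%:R * poch B (bump 0 i) *
      poch (c + (bump 0 i)%:R) (n.+1 - bump 0 i)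
   = (-1) ^+ (i.+1) * ('C(n, i.+1))%:R * poch B i.+1 * poch (c + i.+1%:R) (n - i)
     - B * ((-1) ^+ i * ('C(n, i))%:R * poch (B + 1) i * poch ((c + 1) + i%:R) (n - i)).
  move=> i; rewrite /bump /= add1n binS natrD subSS pochSl exprS.
  have -> : c + 1 + i%:R = c + i.+1%:R by rewrite -[i.+1]addn1 natrD; ring.
  ring.
rewrite (eq_bigr _ (fun i _ => e i)) sumrB -mulr_sumr IH.
have -> : c + 1 - (B + 1) = c - B by ring.
set S1 := \sum_(i < n.+1) _.
have hS1 : (-1) ^+ 0 * ('C(n.+1, 0))%:R * poch B 0 * poch (c + 0%:R) (n.+1 - 0) + S1
   = (c + n%:R) * poch (c - B) n.
  pose g (j : nat) := (-1) ^+ j * ('C(n, j))%:R * poch B j * poch (c + j%:R) (n.+1 - j).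
  have h1 : \sum_(j < n.+2) g j = (-1) ^+ 0 * ('C(n.+1, 0))%:R * poch B 0 * poch (c + 0%:R) (n.+1 - 0) + S1.
    by rewrite big_ord_recl /g !bin0.
  rewrite -h1 big_ord_recr /= [g n.+1]/g bin_small // mulr0 !mul0r addr0.
  rewrite -IH mulr_sumr; apply: eq_bigr => i _.
  rewrite /g subSn; last by rewrite -ltnS.
  rewrite pochS -addrA -natrD subnKC; last by rewrite -ltnS.
  ring.
rewrite addrA hS1 pochS; ring.
Qed.
End Gen.

Section Main.
Variable C : numClosedFieldType.
Variables (l1 l2 a b : C).
Hypothesis hab : forall z : int, a + b != z%:~R.
Hypothesis ha : forall n : nat, a != - (n.+1)%:R.
Variable k : nat.

Definition G (n N : nat) : C :=
  \sum_(j < n.+1) (-1) ^+ j * ('C(k, j))%:R * ('C(N - j, n - j))%:R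
     * poch (n%:R + a + b - N%:R + 1) j / poch (a + 1) j.

Lemma poch_a_neq0 j : poch (a + 1) j != 0.
Proof.
rewrite /poch; apply/prodf_neq0 => i _.
have := ha i; apply: contra => /eqP h; apply/eqP.
rewrite -[i.+1]addn1 natrD.
have -> : a = (a + 1 + i%:R) - (i%:R + 1%:R) by ring.
by rewrite h; ring.
Qed.

Lemma fact_neq0 (n : nat) : (n`!)%:R != 0 :> C.
Proof. by rewrite pnatr_eq0 -lt0n fact_gt0. Qed.

Lemma Qform n N : (n <= N)%N -> Qfun a b n k N = G n N.
Proof.
move=> hnN; rewrite /Qfun /hyp3F2 /G.
pose F := fun j : nat => poch (- n%:R) j * poch (n%:R + a + b - N%:R + 1) j * poch (- k%:R) j /
   ((j`!)%:R * poch (a + 1) j * poch (- N%:R) j).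
rewrite (big_ord_widen n.+1 F) ?ltnS ?geq_minl //.
rewrite big_mkcond mulr_sumr; apply: eq_bigr => [[j hj]] _ /=.
have hjn : (j <= n)%N by rewrite -ltnS.
case: ifP => hjm; last first.
  have hkj : (k < j)%N.
    move/negbT: hjm; lia.
  by rewrite (bin_small hkj) !(mulr0, mul0r).
have hjN : (j <= N)%N by apply: leq_trans hnN.
rewrite /F !poch_neg.
have hNj : (N ^_ j)%:R != 0 :> C by rewrite pnatr_eq0 -lt0n ffact_gt0.
have hP := poch_a_neq0 j.
have hf := fact_neq0 j.
set X := poch _ j.
have e : ('C(N, n) * n ^_ j * k ^_ j = 'C(k, j) * 'C(N - j, n - j) * j`! * N ^_ j)%N.
  rewrite -!bin_ffact.
  transitivity ('C(N, n) * 'C(n, j) * 'C(k, j) * j`! * j`!)%N; first by ring.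
  rewrite binC_id //; ring.
have e' := congr1 (fun t : nat => t%:R : C) e; rewrite /= !natrM in e'.
have -> : ('C(N, n))%:R * ((-1) ^+ j * (n ^_ j)%:R * X * ((-1) ^+ j * (k ^_ j)%:R) /
  ((j`!)%:R * poch (a + 1) j * ((-1) ^+ j * (N ^_ j)%:R))) =
  (('C(N, n))%:R * (n ^_ j)%:R * (k ^_ j)%:R) * X * (-1) ^+ j / ((j`!)%:R * poch (a + 1) j * (N ^_ j)%:R).
  have hm : (-1) ^+ j != 0 :> C by rewrite expf_neq0 // oppr_eq0 oner_eq0.
  by field; rewrite hm hNj hP hf.
rewrite e'; field; by rewrite hNj hP hf.
Qed.

Lemma lin_help1 (L R K u v : C) : L - R = K * (u - v) -> u = v -> L = R.
Proof. by move=> h e; apply/eqP; rewrite -subr_eq0 h e subrr mulr0. Qed.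

Lemma lin_help2 (L R K1 u1 v1 K2 u2 v2 : C) :
  L - R = K1 * (u1 - v1) + K2 * (u2 - v2) -> u1 = v1 -> u2 = v2 -> L = R.
Proof. by move=> h e1 e2; apply/eqP; rewrite -subr_eq0 h e1 e2 !subrr !mulr0 addr0. Qed.

Lemma G_rec n N : (n <= N)%N ->
  (n%:R + 2 + (a + b)) * G n N + (a + b - N%:R + n%:R + 1) * G n.+1 N
  = (2 * n%:R + 2 - N%:R + (a + b)) * G n.+1 N.+1.
Proof.
move=> hnN; rewrite /G !(big_ord_recr n.+1) /= !mulrDr !mulr_sumr addrA -big_split /=.
set x := n%:R + a + b - N%:R + 1.
have e1 : n.+1%:R + a + b - N%:R + 1 = x + 1 by rewrite /x -addn1 natrD; ring.
have e2 : n.+1%:R + a + b - N.+1%:R + 1 = x by rewrite /x -addn1 -[N.+1]addn1 !natrD; ring.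
rewrite e1 e2; congr (_ + _).
  apply: eq_bigr => [[j hj]] _ /=.
  have hjn : (j <= n)%N by rewrite -ltnS.
  have hjN : (j <= N)%N by apply: leq_trans hnN.
  rewrite subSn // subSn //.
  rewrite binS.
  set A := 'C(N - j, n - j); set B := 'C(N - j, (n - j).+1).
  have hAB : ((n - j).+1 * B = (N - n) * A)%N.
    rewrite /A /B mul_bin_left; congr (_ * _)%N; lia.
  have hAB' := congr1 (fun t : nat => t%:R : C) hAB; rewrite /= !natrM in hAB'.
  rewrite -addn1 natrD natrB // natrB // in hAB'.
  have hp : x * poch (x + 1) j = poch x j * (x + j%:R) by rewrite -pochSl pochS.
  rewrite natrD.
  apply: (lin_help2 (K1 := - (-1) ^+ j * ('C(k, j))%:R * poch x j / poch (a + 1) j)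
     (K2 := (-1) ^+ j * ('C(k, j))%:R * B%:R / poch (a + 1) j) _ hAB' hp).
  rewrite /x /A /B; ring.
rewrite !subnn !bin0.
have hp : x * poch (x + 1) n.+1 = poch x n.+1 * (x + n.+1%:R) by rewrite -pochSl pochS.
apply: (lin_help1 (K := (-1) ^+ n.+1 * ('C(k, n.+1))%:R / poch (a + 1) n.+1) _ hp).
rewrite /x -addn1 natrD; ring.
Qed.

Lemma G_top N : (k <= N)%N -> G N.+1 N = 0.
Proof.
move=> hkN; rewrite /G big1 // => [[j hj]] _ /=.
case: (leqP j N) => hjN.
  rewrite [('C(N - j, _))]bin_small; last by rewrite subSn // ltnS.
  by rewrite !(mulr0, mul0r).
have -> : j = N.+1 by apply/eqP; rewrite eqn_leq hjN -ltnS hj.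
by rewrite bin_small ?ltnS // !(mulr0, mul0r).
Qed.

Lemma G_kk n : (n <= k)%N ->
  G n k = ('C(k, n))%:R * poch (k%:R - n%:R - b) n / poch (a + 1) n.
Proof.
move=> hnk.
have -> : k%:R - n%:R - b = (a + 1) - (n%:R + a + b - k%:R + 1) by ring.
rewrite -chu /G -mulrA [_ * (poch (a + 1) n)^-1]mulrC mulrA mulr_sumr; apply: eq_bigr => [[j hj]] _ /=.
have hjn : (j <= n)%N by rewrite -ltnS.
have e := binC_id hjn hnk.
have e' := congr1 (fun t : nat => t%:R : C) e; rewrite /= !natrM in e'.
have hp := poch_add (a + 1) j (n - j); rewrite subnKC // in hp.
have hPn := poch_a_neq0 n.
have hPj := poch_a_neq0 j.
rewrite hp in hPn *.
have hQ : poch (a + 1 + j%:R) (n - j) != 0.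
  by apply: contraNneq hPn => ->; rewrite mulr0.
set Y := poch _ j.
have -> : (-1) ^+ j * ('C(k, j))%:R * ('C(k - j, n - j))%:R * Y / poch (a + 1) j
  = (-1) ^+ j * (('C(k, j))%:R * ('C(k - j, n - j))%:R) * Y / poch (a + 1) j by ring.
rewrite -e'; field.
by rewrite hPj hQ.
Qed.

Lemma Deig_eq n m : Deig l1 l2 a b n m = 2 * (n%:R - m%:R + a + b + 1).
Proof. rewrite /Deig; ring. Qed.

Lemma Deig_neq0 n m : Deig l1 l2 a b n m != 0.
Proof.
rewrite Deig_eq mulf_eq0 negb_or pnatr_eq0 /=.
have := hab (m%:Z - n%:Z - 1)%R; apply: contra => /eqP h; apply/eqP.
rewrite !intrD !intrN -!pmulrn.
have -> : a + b = (n%:R - m%:R + a + b + 1) - (n%:R - m%:R + 1) by ring.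
rewrite h; ring.
Qed.

Lemma DE_at v n m : DeltaE l1 l2 a b v n m =
  ((2 * n%:R + 2 * (a + b) + 2) * E1 v n m + (2 * (a + b) + 2 - 2 * m%:R) * E2 v n m)
   / Deig l1 l2 a b n m.
Proof. rewrite /DeltaE /Dinv /vadd /vsub /vscale /H1 /H2; congr (_ / _); ring. Qed.

Lemma DF_at v n m : DeltaF l1 l2 a b v n m =
  ((2 * a + 2 + 2 * n%:R) * F1 v n m + (2 * b - 2 * m%:R) * F2 v n m)
   / Deig l1 l2 a b n m.
Proof. rewrite /DeltaF /Dinv /vadd /vsub /vscale /H1 /H2; congr (_ / _); ring. Qed.

Lemma DH_at v n m : DeltaH l1 l2 v n m = (l1 + l2 + 2 * n%:R + 2 * m%:R) * v n m.
Proof. rewrite /DeltaH /vadd /H1 /H2; ring. Qed.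

Lemma comm_HE v : comm (DeltaH l1 l2) (DeltaE l1 l2 a b) v = vscale 2 (DeltaE l1 l2 a b v).
Proof.
apply: functional_extensionality => n; apply: functional_extensionality => m.
have hD := Deig_neq0 n m.
rewrite /comm /vsub /vscale DH_at !DE_at /E1 /E2.
case: n hD => [|n] hD; case: m hD => [|m] hD; rewrite ?DH_at; field; exact hD.
Qed.

Lemma comm_HF v : comm (DeltaH l1 l2) (DeltaF l1 l2 a b) v = vscale (-2) (DeltaF l1 l2 a b v).
Proof.
apply: functional_extensionality => n; apply: functional_extensionality => m.
have hD := Deig_neq0 n m.
rewrite /comm /vsub /vscale DH_at !DF_at /F1 /F2 !DH_at.
field; exact hD.
Qed.

Lemma Dsh1 (N M : nat) : N.+1%:R - M%:R + a + b + 1 = (N%:R - M%:R + a + b + 1) + 1 :> C.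
Proof. rewrite -addn1 natrD; ring. Qed.
Lemma Dsh2 (N M : nat) : N%:R - M.+1%:R + a + b + 1 = (N%:R - M%:R + a + b + 1) - 1 :> C.
Proof. rewrite -addn1 natrD; ring. Qed.

Lemma hz_of (N M : nat) (d : C) : a = d - N%:R + M%:R - b - 1 -> forall z : int, d + z%:~R != 0.
Proof.
move=> ed z; have := hab (- (N%:Z - M%:Z + 1 + z))%R; apply: contra => /eqP h; apply/eqP.
move/eqP: h; rewrite addr_eq0 => /eqP hd.
rewrite intrN !intrD -!pmulrn ed hd; ring.
Qed.

Lemma nzd (d x : C) (z : int) : (forall z : int, d + z%:~R != 0) -> x = d + z%:~R -> x != 0.
Proof. by move=> h ->. Qed.

Ltac nzt hz := first [ by rewrite pnatr_eq0
  | apply: (nzd (z := 0) hz); ring | apply: (nzd (z := 1) hz); ring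
  | apply: (nzd (z := -1) hz); ring | apply: (nzd (z := 2) hz); ring
  | apply: (nzd (z := -2) hz); ring | apply: (nzd (z := 3) hz); ring
  | apply: (nzd (z := -3) hz); ring ].

Ltac solve_case N M :=
  let d := fresh "d" in let ed := fresh "ed" in let hz := fresh "hz" in
  (have [d ed] : exists d : C, a = d - N%:R + M%:R - b - 1
    by (exists (a + N%:R - M%:R + b + 1); ring));
  (have hz := hz_of ed); rewrite ed; field; repeat (apply/andP; split); nzt hz.

Lemma comm_EF v : comm (DeltaE l1 l2 a b) (DeltaF l1 l2 a b) v = v.
Proof.
apply: functional_extensionality => n; apply: functional_extensionality => m.
rewrite /comm /vsub DE_at DF_at /E1 /E2 /F1 /F2.
case: n => [|n]; case: m => [|m];
  rewrite ?DE_at ?DF_at /E1 /E2 /F1 /F2 !Deig_eq.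
- solve_case 0%N 0%N.
- solve_case 0%N m.+1.
- solve_case n.+1 0%N.
- solve_case n.+1 m.+1.
Qed.

Lemma G0 N : G 0 N = 1.
Proof. by rewrite /G big_ord_recl big_ord0 /= !poch0 !bin0 expr0 addr0 divr1 !mulr1. Qed.

Lemma wE N : (k <= N)%N -> DeltaE l1 l2 a b (wvec a b k N) = wvec a b k N.+1.
Proof.
move=> hkN.
apply: functional_extensionality => n; apply: functional_extensionality => m.
have hD := Deig_neq0 n m.
rewrite DE_at /E1 /E2 /wvec.
apply: (mulIf hD); rewrite divfK //.
case: n hD => [|n] hD; case: m hD => [|m] hD.
- by rewrite !mulr0 addr0 mul0r.
- rewrite !add0n eqSS mulr0 add0r; case: eqP => [<-|_]; last by rewrite !(mulr0, mul0r).
  rewrite !Qform // !G0 Deig_eq; ring.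
- rewrite !addn0 eqSS mulr0 addr0; case: eqP => [eN|_]; last by rewrite !(mulr0, mul0r).
  subst N; rewrite !Qform //; have := G_rec (leqnn n); rewrite G_top // => h.
  rewrite Deig_eq; move: (G n n) (G n.+1 n.+1) h => g0 g1 h.
  apply: (lin_help1 (K := 2) _ h); ring.
- rewrite !addSn !addnS !eqSS.
  case: eqP => [eN|_]; last by rewrite !(mulr0, mul0r, addr0).
  subst N.
  have q1 : (n <= (n + m).+1)%N by lia.
  have q2 : (n.+1 <= (n + m).+1)%N by lia.
  have q3 : (n.+1 <= (n + m).+2)%N by lia.
  rewrite (Qform q1) (Qform q2) (Qform q3).
  have h := G_rec q1.
  rewrite Deig_eq; move: (G n (n + m).+1) (G n.+1 (n + m).+1) (G n.+1 (n + m).+2) h => g0 g1 g2 h.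
  apply: (lin_help1 (K := 2) _ h); ring.
Qed.

Lemma wF_kk : DeltaF l1 l2 a b (wvec a b k k) = vzero C.
Proof.
apply: functional_extensionality => n; apply: functional_extensionality => m.
have hD := Deig_neq0 n m.
rewrite DF_at /F1 /F2 /wvec /vzero.
apply: (mulIf hD); rewrite divfK // mul0r.
rewrite addSn addnS; case: eqP => [ek|_]; last by rewrite !(mulr0, mul0r, addr0).
have q1 : (n.+1 <= k)%N by rewrite -ek; lia.
have q0 : (n <= k)%N by rewrite -ek; lia.
rewrite (Qform q1) (Qform q0) (G_kk q1) (G_kk q0) -ek.
have := poch_a_neq0 n.+1; rewrite pochS mulf_eq0 negb_or => /andP [hA hA1].
rewrite [poch _ n.+1]pochSl.
have -> : (n + m).+1%:R - n.+1%:R - b + 1 = (n + m).+1%:R - n%:R - b :> C.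
  by rewrite -[n.+1]addn1 natrD; ring.
have eC := mul_bin_left (n + m).+1 n.
have e2 : ((n + m).+1 - n = m.+1)%N by lia.
rewrite e2 in eC.
have eC' := congr1 (fun t : nat => t%:R : C) eC; rewrite /= !natrM in eC'.
move: eC' hA hA1.
move: ('C((n + m).+1, n.+1))%:R ('C((n + m).+1, n))%:R
  (poch ((n + m).+1%:R - n%:R - b) n) (poch (a + 1) n) => C1 C0 P A eC' hA hA1.
apply: (lin_help1 (K := - 2 * ((n + m).+1%:R - n.+1%:R - b) * P / A) _ eC').
by field; rewrite hA hA1.
Qed.

Lemma DE_lin c v : DeltaE l1 l2 a b (vscale c v) = vscale c (DeltaE l1 l2 a b v).
Proof.
apply: functional_extensionality => n; apply: functional_extensionality => m.
rewrite /vscale !DE_at /E1 /E2.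
by case: n => [|n]; case: m => [|m]; rewrite /vscale; ring.
Qed.

Lemma DE_zero : DeltaE l1 l2 a b (vzero C) = vzero C.
Proof.
apply: functional_extensionality => n; apply: functional_extensionality => m.
rewrite /vzero !DE_at /E1 /E2.
by case: n => [|n]; case: m => [|m]; rewrite ?(mulr0, addr0, mul0r).
Qed.

Lemma wF N : (k <= N)%N -> DeltaF l1 l2 a b (wvec a b k N) =
  (if N == k then vzero C else vscale (- (N - k)%:R) (wvec a b k N.-1)).
Proof.
elim: N => [|N IH] hkN.
  have e0 : k = 0%N by apply/eqP; rewrite -leqn0.
  by rewrite -[0%N]e0 eqxx wF_kk.
case: (ltngtP k N.+1) hkN => // [hlt|hEq] _; last first.
  by rewrite -hEq wF_kk.
rewrite /=.
have hkN : (k <= N)%N by rewrite -ltnS.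
have e := comm_EF (wvec a b k N).
rewrite /comm wE // in e.
have -> : DeltaF l1 l2 a b (wvec a b k N.+1) =
   vsub (DeltaE l1 l2 a b (DeltaF l1 l2 a b (wvec a b k N))) (wvec a b k N).
  apply: functional_extensionality => n; apply: functional_extensionality => m.
  have := congr1 (fun f => f n m) e; rewrite /vsub /= => e'.
  rewrite -e'; ring.
rewrite IH //.
case: eqP => [eN|neN].
  rewrite DE_zero -eN subSnn.
  by apply: functional_extensionality => n; apply: functional_extensionality => m;
    rewrite /vsub /vscale /vzero; ring.
rewrite DE_lin.
have hk1 : (k <= N.-1)%N.
  by move/eqP: neN; rewrite neq_ltn ltnNge hkN /=; case: N {IH hlt hkN e} => //.
rewrite wE //.
have -> : N.-1.+1 = N by rewrite prednK //; lia.
apply: functional_extensionality => n; apply: functional_extensionality => m.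
rewrite /vsub /vscale subSn // -addn1 natrD; ring.
Qed.

Lemma wH N : DeltaH l1 l2 (wvec a b k N) = vscale (l1 + l2 + 2 * N%:R) (wvec a b k N).
Proof.
apply: functional_extensionality => n; apply: functional_extensionality => m.
rewrite DH_at /vscale /wvec; case: eqP => [<-|_]; last by rewrite !mulr0.
rewrite natrD; ring.
Qed.
End Main.


Theorem mainTheorem1 (C : numClosedFieldType) (l1 l2 a b : C)
  (hab : forall z : int, a + b != z%:~R)
  (ha : forall n : nat, a != - (n.+1)%:R) :
  (* D is invertible: its eigenvalues are nonzero *)
  (forall n m : nat, Deig l1 l2 a b n m != 0) /\
  (* (a) oscillator algebra relations on W *)
  (forall v : vec C, inW v ->
     comm (DeltaH l1 l2) (DeltaE l1 l2 a b) v = vscale 2 (DeltaE l1 l2 a b v) /\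
     comm (DeltaH l1 l2) (DeltaF l1 l2 a b) v = vscale (-2) (DeltaF l1 l2 a b v) /\
     comm (DeltaE l1 l2 a b) (DeltaF l1 l2 a b) v = v) /\
  (* (b) Clebsch-Gordan vectors *)
  (forall k N : nat, (k <= N)%N ->
     DeltaH l1 l2 (wvec a b k N) = vscale (l1 + l2 + 2 * N%:R) (wvec a b k N) /\
     DeltaE l1 l2 a b (wvec a b k N) = wvec a b k N.+1 /\
     DeltaF l1 l2 a b (wvec a b k N) =
       (if N == k then vzero C
        else vscale (- (N - k)%:R) (wvec a b k N.-1))).
Proof.
split; first exact: (Deig_neq0 l1 l2 hab).
split.
  move=> v _; split; first exact: (comm_HE l1 l2 hab).
  split; first exact: (comm_HF l1 l2 hab).
  exact: (comm_EF l1 l2 hab).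
move=> k N hkN; split; first exact: wH.
split; first exact: (wE l1 l2 hab ha hkN).
exact: (wF l1 l2 hab ha hkN).
Qed.
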